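(* Assume the standing assumptions (A1)–(A4) and let $r>0$ be a constant such that $\|u\|^2+\|w\|^2\le r$ for every $u\in\mathcal U$ and every extreme point $w$ of $\mathcal W$. Then the optimal value of \[ (\overline{RLP})\quad \min_{x,\lambda,\Lambda,\rho}\ c^Tx+\lambda+r\rho\ \ \text{s.t.}\ \ x\in\mathcal X,\ \ \lambda g_1g_1^T-\tfrac12G(x)+\tfrac12(E^T\Lambda^T+\Lambda E)+\rho I\in\mathrm{COP}(\widehat{\mathcal U}\times\mathbb R^m_+),\ \ \rho\ge0, \] with $\lambda,\rho\in\mathbb R$, $\Lambda\in\mathbb R^{(k+m)\times n_2}$, equals $v^*_{RLP}$.
   Context: Data: $A\in\mathbb R^{m\times n_1}$, $B\in\mathbb R^{m\times n_2}$, $c\in\mathbb R^{n_1}$, $d\in\mathbb R^{n_2}$, $F\in\mathbb R^{m\times k}$, $\mathcal X\subseteq\mathbb R^{n_1}$ closed convex. $\widehat{\mathcal U}\subseteq\mathbb R_+\times\mathbb R^{k-1}$ is a closed, convex, full-dimensional cone and $\mathcal U:=\{u\in\widehat{\mathcal U}: u_1=1\}$, assumed nonempty and compact. $e_1\in\mathbb R^k$ is the first standard basis vector, $g_1:=(e_1;0)\in\mathbb R^{k+m}$. The two-stage problem (RLP) is: $v^*_{RLP}:=\inf\{c^Tx+\sup_{u\in\mathcal U}d^Ty(u)\}$ over $x\in\mathcal X$ and maps $y:\mathcal U\to\mathbb R^{n_2}$ with $Ax+By(u)\ge Fu$ for all $u\in\mathcal U$. Standing assumptions: (A1) $\mathcal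 X$ and $\widehat{\mathcal U}$ are computationally tractable; (A2) (RLP) is feasible; (A3) $v^*_{RLP}$ is finite; (A4) relatively complete recourse: for all $x\in\mathcal X$, $u\in\mathcal U$ there is $y\in\mathbb R^{n_2}$ with $By\ge Fu-Ax$. Define $\mathcal W:=\{w\in\mathbb R^m: w\ge0,\ B^Tw=d\}$, $E:=\begin{pmatrix}-de_1^T & B^T\end{pmatrix}\in\mathbb R^{n_2\times(k+m)}$, $G(x):=\begin{pmatrix}0&(F-Axe_1^T)^T\\ F-Axe_1^T&0\end{pmatrix}\in\mathcal S^{k+m}$. For a closed convex cone $\mathcal K\subseteq\mathbb R^n$, $\mathrm{COP}(\mathcal K):=\{M\in\mathcal S^n: z^TMz\ge0\ \forall z\in\mathcal K\}$. *)

(* Defs.v *)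
From Stdlib Require Import Reals.
From mathcomp Require Import ssreflect ssrfun ssrbool eqtype ssrnat fintype bigop.
Set Implicit Arguments.
Unset Strict Implicit.
Unset Printing Implicit Defensive.
Local Open Scope R_scope.

Definition vec (n : nat) := 'I_n -> R.
Definition mat (p q : nat) := 'I_p -> 'I_q -> R.

Definition sumI (n : nat) (f : 'I_n -> R) : R := \big[Rplus/R0]_(i < n) f i.
Definition dot (n : nat) (u v : vec n) : R := sumI (fun i => u i * v i).
Definition mulmv (p q : nat) (A : mat p q) (v : vec q) : vec p :=
  fun i => sumI (fun j => A i j * v j).
Definition vsub (n : nat) (u v : vec n) : vec n := fun i => u i - v i.
Definition vscale (n : nat) (t : R) (u : vec n) : vec n := fun i => t * u i.
Definition vadd (n : nat) (u v : vec n) : vec n := fun i => u i + v i.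
Definition dist2 (n : nat) (u v : vec n) : R := dot (vsub u v) (vsub u v).
Definition qform (n : nat) (M : mat n n) (z : vec n) : R :=
  sumI (fun i => sumI (fun j => z i * M i j * z j)).

Definition vconvex (n : nat) (S : vec n -> Prop) : Prop :=
  forall u v t, S u -> S v -> 0 <= t <= 1 ->
    S (vadd (vscale t u) (vscale (1 - t) v)).
Definition vclosed (n : nat) (S : vec n -> Prop) : Prop :=
  forall x, (forall eps, 0 < eps -> exists y, S y /\ dist2 x y < eps) -> S x.
Definition vbounded (n : nat) (S : vec n -> Prop) : Prop :=
  exists M, forall u, S u -> dot u u <= M.
Definition vcompact (n : nat) (S : vec n -> Prop) : Prop := vclosed S /\ vbounded S.
Definition vcone (n : nat) (S : vec n -> Prop) : Prop :=
  forall u t, S u -> 0 <= t -> S (vscale t u).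
Definition vfull_dim (n : nat) (S : vec n -> Prop) : Prop :=
  exists x eps, 0 < eps /\ forall y, dist2 x y < eps -> S y.
Definition extreme_point (n : nat) (S : vec n -> Prop) (w : vec n) : Prop :=
  S w /\ forall a b t, S a -> S b -> 0 < t < 1 ->
    w = vadd (vscale t a) (vscale (1 - t) b) -> a = w /\ b = w.

Definition is_glb (S : R -> Prop) (v : R) : Prop :=
  (forall t, S t -> v <= t) /\ (forall v', (forall t, S t -> v' <= t) -> v' <= v).

(* ---- data of the problem; the first-stage index k is written K.+1 ---- *)
Section Problem.
Variables (m n1 n2 K : nat).
Variables (A : mat m n1) (B : mat m n2) (c : vec n1) (d : vec n2) (F : mat m K.+1).
Variables (X : vec n1 -> Prop) (Uhat : vec K.+1 -> Prop).

Definition Uset (u : vec K.+1) : Prop := Uhat u /\ u ord0 = 1.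

Definition Wset (w : vec m) : Prop :=
  (forall i, 0 <= w i) /\ (forall j, sumI (fun i => B i j * w i) = d j).

Definition RLP_feasible (x : vec n1) (y : vec K.+1 -> vec n2) : Prop :=
  X x /\ forall u, Uset u -> forall i,
    mulmv A x i + mulmv B (y u) i >= mulmv F u i.

(* the set of finite objective values c^T x + sup_{u in U} d^T y(u) of (RLP)
   (feasible pairs whose inner supremum is +infinity contribute +infinity and
   hence do not affect the infimum) *)
Definition RLP_values (t : R) : Prop :=
  exists x y s, RLP_feasible x y /\
    is_lub (fun z => exists u, Uset u /\ z = dot d (y u)) s /\
    t = dot c x + s.

(* block-matrix objects in S^{k+m}, indices split as 'I_(K.+1) + 'I_m *)
Definition FAx (x : vec n1) : mat m K.+1 :=
  fun i j => F i j - mulmv A x i * (if j == ord0 then 1 else 0).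

Definition Gx (x : vec n1) : mat (K.+1 + m) (K.+1 + m) :=
  fun i j => match split i, split j with
             | inl a, inr b => FAx x b a
             | inr b, inl a => FAx x b a
             | _, _ => 0
             end.

Definition Emat : mat n2 (K.+1 + m) :=
  fun i j => match split j with
             | inl a => - d i * (if a == ord0 then 1 else 0)
             | inr b => B b i
             end.

Definition g1g1T : mat (K.+1 + m) (K.+1 + m) :=
  fun i j => match split i, split j with
             | inl a, inl b => if (a == ord0) && (b == ord0) then 1 else 0
             | _, _ => 0
             end.

Definition LamE (Lam : mat (K.+1 + m) n2) : mat (K.+1 + m) (K.+1 + m) :=
  fun i j => sumI (fun l => Lam i l * Emat l j).

Definition Mbar (x : vec n1) (lam : R) (Lam : mat (K.+1 + m) n2) (rho : R)
  : mat (K.+1 + m) (K.+1 + m) :=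
  fun i j => lam * g1g1T i j - / 2 * Gx x i j
             + / 2 * (LamE Lam j i + LamE Lam i j)
             + rho * (if i == j then 1 else 0).

Definition Kcone (z : vec (K.+1 + m)) : Prop :=
  Uhat (fun a => z (lshift m a)) /\ forall b, 0 <= z (rshift K.+1 b).

Definition COP (M : mat (K.+1 + m) (K.+1 + m)) : Prop :=
  (forall i j, M i j = M j i) /\ forall z, Kcone z -> 0 <= qform M z.

Definition RLPbar_values (r t : R) : Prop :=
  exists x lam Lam rho, X x /\ COP (Mbar x lam Lam rho) /\ 0 <= rho /\
    t = dot c x + lam + r * rho.

End Problem.

(* Main.v *)
Require Import Defs.
From Stdlib Require Import Reals.
From mathcomp Require Import ssreflect ssrfun ssrbool eqtype ssrnat fintype bigop.
Set Warnings "-notation-overridden -redundant-canonical-projection".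
From Stdlib Require Import Lra Lia Psatz Classical FunctionalExtensionality ClassicalEpsilon.
From mathcomp Require Import seq finfun.
From HB Require Import structures.
Local Open Scope R_scope.

Lemma Rplus_assoc' : associative Rplus. Proof. move=> x y z; ring. Qed.
Lemma Rplus_comm' : commutative Rplus. Proof. move=> x y; ring. Qed.
Lemma Rplus_0_l' : left_id R0 Rplus. Proof. move=> x; ring. Qed.
HB.instance Definition _ := Monoid.isComLaw.Build R R0 Rplus Rplus_assoc' Rplus_comm' Rplus_0_l'.

Lemma split_l (p q : nat) (a : 'I_p) : split (lshift q a) = inl a.
Proof. exact: (unsplitK (inl a)). Qed.
Lemma split_r (p q : nat) (b : 'I_q) : split (rshift p b) = inr b.
Proof. exact: (unsplitK (inr b)). Qed.

Section Sums.
Variable I : finType.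
Lemma bsum_add (f g : I -> R) :
  \big[Rplus/0]_(i : I) (f i + g i) = \big[Rplus/0]_(i : I) f i + \big[Rplus/0]_(i : I) g i.
Proof. by rewrite big_split. Qed.
Lemma bsum_scale (c : R) (f : I -> R) :
  \big[Rplus/0]_(i : I) (c * f i) = c * \big[Rplus/0]_(i : I) f i.
Proof.
  symmetry; apply: (big_morph (fun x => c * x)); [move=> x y /=; ring | ring].
Qed.
Lemma bsum_le (f g : I -> R) : (forall i, f i <= g i) ->
  \big[Rplus/0]_(i : I) f i <= \big[Rplus/0]_(i : I) g i.
Proof.
  move=> H; apply: (big_ind2 (fun x y => x <= y)); [lra | move=> *; lra | move=> i _; exact: H].
Qed.
Lemma bsum_ge0 (f : I -> R) : (forall i, 0 <= f i) -> 0 <= \big[Rplus/0]_(i : I) f i.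
Proof. move=> H; apply: (big_ind (fun x => 0 <= x)); [lra| move=> *; lra | move=> i _; exact: H]. Qed.
Lemma bsum_ext (f g : I -> R) : (forall i, f i = g i) ->
  \big[Rplus/0]_(i : I) f i = \big[Rplus/0]_(i : I) g i.
Proof. move=> H; apply: eq_bigr => i _; exact: H. Qed.
Lemma bsum_zero (f : I -> R) : (forall i, f i = 0) -> \big[Rplus/0]_(i : I) f i = 0.
Proof. move=> H; rewrite big1 //. Qed.
Lemma bsum_term (f : I -> R) (j : I) : (forall i, 0 <= f i) -> f j <= \big[Rplus/0]_(i : I) f i.
Proof.
  move=> H; rewrite (bigD1 j) //=.
  have : 0 <= \big[Rplus/0]_(i | i != j) f i.
    apply: (big_ind (fun x => 0 <= x)); [lra| move=> *; lra | move=> i _; exact: H].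
  lra.
Qed.
Lemma bsum_single (f : I -> R) (j : I) :
  \big[Rplus/0]_(i : I) (if i == j then f i else 0) = f j.
Proof.
  rewrite (bigD1 j) //= eqxx big1 ?Rplus_0_r // => i /negbTE ->; done.
Qed.
Lemma bsum_opp (f : I -> R) : \big[Rplus/0]_(i : I) (- f i) = - \big[Rplus/0]_(i : I) f i.
Proof. rewrite -(bsum_ext (fun i => (-1) * f i)); last by move=> i; ring.
 rewrite bsum_scale; ring. Qed.
End Sums.

Lemma bsum_exch (I J : finType) (f : I -> J -> R) :
  \big[Rplus/0]_(i : I) \big[Rplus/0]_(j : J) f i j = \big[Rplus/0]_(j : J) \big[Rplus/0]_(i : I) f i j.
Proof. exact: exchange_big. Qed.

Lemma sumI_add n (f g : 'I_n -> R) : sumI (fun i => f i + g i) = sumI f + sumI g.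
Proof. exact: bsum_add. Qed.
Lemma sumI_scale n c (f : 'I_n -> R) : sumI (fun i => c * f i) = c * sumI f.
Proof. exact: bsum_scale. Qed.
Lemma sumI_le n (f g : 'I_n -> R) : (forall i, f i <= g i) -> sumI f <= sumI g.
Proof. exact: bsum_le. Qed.
Lemma sumI_ge0 n (f : 'I_n -> R) : (forall i, 0 <= f i) -> 0 <= sumI f.
Proof. exact: bsum_ge0. Qed.
Lemma sumI_ext n (f g : 'I_n -> R) : (forall i, f i = g i) -> sumI f = sumI g.
Proof. exact: bsum_ext. Qed.
Lemma sumI_zero n (f : 'I_n -> R) : (forall i, f i = 0) -> sumI f = 0.
Proof. exact: bsum_zero. Qed.
Lemma sumI_term n (f : 'I_n -> R) j : (forall i, 0 <= f i) -> f j <= sumI f.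
Proof. exact: bsum_term. Qed.
Lemma sumI_exch p q (f : 'I_p -> 'I_q -> R) :
  sumI (fun i => sumI (fun j => f i j)) = sumI (fun j => sumI (fun i => f i j)).
Proof. exact: bsum_exch. Qed.
Lemma sumI_split p q (f : 'I_(p + q) -> R) :
  sumI f = sumI (fun a => f (lshift q a)) + sumI (fun b => f (rshift p b)).
Proof. rewrite /sumI big_split_ord //. Qed.
Lemma sumI_opp n (f : 'I_n -> R) : sumI (fun i => - f i) = - sumI f.
Proof. exact: bsum_opp. Qed.
Lemma sumI_sub n (f g : 'I_n -> R) : sumI (fun i => f i - g i) = sumI f - sumI g.
Proof. rewrite /Rminus -sumI_opp -sumI_add //. Qed.
Lemma sumI_recl n (f : 'I_n.+1 -> R) : sumI f = f ord0 + sumI (fun i => f (lift ord0 i)).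
Proof. rewrite /sumI big_ord_recl //. Qed.
Lemma sumI_single n (f : 'I_n -> R) j : sumI (fun i => if i == j then f i else 0) = f j.
Proof. exact: bsum_single. Qed.
Lemma sumI_scale_r n c (f : 'I_n -> R) : sumI (fun i => f i * c) = sumI f * c.
Proof. rewrite (@sumI_ext _ _ (fun i => c * f i)); last by move=> i; ring.
  rewrite sumI_scale; ring. Qed.

Lemma amgm (mu a y : R) : 0 < mu -> - (y * y) / (4 * mu) <= mu * (a * a) - a * y.
Proof.
  move=> Hmu.
  have E : mu * (a * a) - a * y - (- (y * y) / (4 * mu)) = (2 * mu * a - y) * (2 * mu * a - y) / (4 * mu).
    field; lra.
  have : 0 <= (2 * mu * a - y) * (2 * mu * a - y) / (4 * mu).
    apply: Rmult_le_pos; [exact: (Rle_0_sqr (2 * mu * a - y)) | apply: Rlt_le; apply: Rinv_0_lt_compat; lra].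
  lra.
Qed.

Notation bs I f := (\big[Rplus/0]_(i : I) f i).

Lemma argmin_seq (I : eqType) (P : I -> Prop) (f : I -> R) (s : seq I) :
  (exists i, i \in s /\ P i) -> exists i0, i0 \in s /\ P i0 /\ forall i, i \in s -> P i -> f i0 <= f i.
Proof.
  elim: s => [|a s IH]; first by case=> i [].
  case=> i [Hi HP].
  case: (classic (exists i, i \in s /\ P i)) => [Hex|Hnex].
  - case: (IH Hex) => i0 [Hs [HP0 Hmin]].
    case: (classic (P a /\ f a <= f i0)) => [[Pa Ha]|Hna].
    + exists a; split; first by rewrite inE eqxx.
      split=> // j; rewrite inE => /orP [/eqP -> _|Hj Pj]; first lra.
      have := Hmin j Hj Pj; lra.
    + exists i0; split; first by rewrite inE Hs orbT.
      split=> // j; rewrite inE => /orP [/eqP -> Pj|Hj Pj]; last exact: Hmin.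
      apply: Rnot_lt_le => Hlt; apply: Hna; split=> //; lra.
  - have Hia : i = a.
      move: Hi; rewrite inE => /orP [/eqP //|Hs]; exfalso; apply: Hnex; by exists i.
    subst i. exists a; split; first by rewrite inE eqxx.
    split=> // j; rewrite inE => /orP [/eqP -> _|Hj Pj]; first lra.
    exfalso; apply: Hnex; by exists j.
Qed.

Lemma argmin_fin (I : finType) (P : I -> Prop) (f : I -> R) :
  (exists i, P i) -> exists i0, P i0 /\ forall i, P i -> f i0 <= f i.
Proof.
  case=> i Hi.
  case: (@argmin_seq I P f (enum I)); first by exists i; rewrite mem_enum.
  move=> i0 [_ [H1 H2]]; exists i0; split=> // j Hj; apply: H2 => //; by rewrite mem_enum.
Qed.

Lemma argmax_fin (I : finType) (P : I -> Prop) (f : I -> R) :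
  (exists i, P i) -> exists i0, P i0 /\ forall i, P i -> f i <= f i0.
Proof.
  move=> H; case: (@argmin_fin I P (fun i => - f i) H) => i0 [H1 H2].
  exists i0; split=> // i Hi; have := H2 i Hi; lra.
Qed.

Lemma sep_bounds (I : finType) (P N : I -> Prop) (u l : I -> R) :
  (forall i j, P i -> N j -> l j <= u i) ->
  exists t, (forall i, P i -> t <= u i) /\ (forall j, N j -> l j <= t).
Proof.
  move=> H.
  case: (classic (exists i, P i)) => [HP|HnP].
  - case: (@argmin_fin _ P u HP) => i0 [P0 Hm]; exists (u i0); split=> // j Nj; exact: H.
  - case: (classic (exists j, N j)) => [HN|HnN].
    + case: (@argmax_fin _ N l HN) => j0 [N0 Hm]; exists (l j0); split=> // i Pi.
      exfalso; apply: HnP; by exists i.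
    + exists 0; split=> [i Pi|j Nj]; exfalso; [apply: HnP; by exists i| apply: HnN; by exists j].
Qed.

Section FM.
Variable (I : finType) (n : nat) (G : I -> 'I_n.+1 -> R) (h : I -> R).
Definition gg i := G i ord0.
Definition coef (ij : I * I) (k : I) : R :=
  let i := ij.1 in let j := ij.2 in
  if Rlt_dec 0 (gg i) then if Rlt_dec (gg j) 0 then
     (if k == i then - gg j else 0) + (if k == j then gg i else 0) else 0
  else if (i == j) then if Req_EM_T (gg i) 0 then (if k == i then 1 else 0) else 0 else 0.

Lemma coef_ge0 ij k : 0 <= coef ij k.
Proof.
  rewrite /coef /=.
  case: Rlt_dec => H1 /=; [case: Rlt_dec => H2 /=|].
  - case: (k == ij.1); case: (k == ij.2); lra.
  - lra.
  - case: (ij.1 == ij.2); last lra.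
    case: Req_EM_T => _ /=; last lra.
    case: (k == ij.1); lra.
Qed.

Lemma sum_coef ij (f : I -> R) :
  bs I (fun k => coef ij k * f k) =
  let i := ij.1 in let j := ij.2 in
  if Rlt_dec 0 (gg i) then if Rlt_dec (gg j) 0 then - gg j * f i + gg i * f j else 0
  else if (i == j) then if Req_EM_T (gg i) 0 then f i else 0 else 0.
Proof.
  rewrite /coef /=.
  case: Rlt_dec => H1 /=; [case: Rlt_dec => H2 /=|].
  - rewrite (@bsum_ext _ _ (fun k => (if k == ij.1 then - gg ij.2 * f k else 0) + (if k == ij.2 then gg ij.1 * f k else 0))); last first.
      by move=> k; case: (k == ij.1); case: (k == ij.2); ring.
    rewrite bsum_add !bsum_single //.
  - apply: bsum_zero => k; ring.
  - case: (ij.1 == ij.2); last by apply: bsum_zero => k; ring.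
    case: Req_EM_T => H /=; last by apply: bsum_zero => k; ring.
    rewrite (@bsum_ext _ _ (fun k => if k == ij.1 then f k else 0)) ?bsum_single //.
    by move=> k; case: (k == ij.1); ring.
Qed.
End FM.
Arguments coef {I n}. Arguments gg {I n}. Arguments coef_ge0 {I n}. Arguments sum_coef {I n}.

Lemma lin_comb (I : finType) n (c : I -> R) (G : I -> 'I_n -> R) (y : 'I_n -> R) :
  sumI (fun l => bs I (fun k => c k * G k l) * y l) = bs I (fun k => c k * sumI (fun l => G k l * y l)).
Proof.
  rewrite /sumI.
  rewrite (eq_bigr (fun l => bs I (fun k => c k * G k l * y l))); last first.
    move=> l _; rewrite -[RHS](@bsum_ext _ (fun k => y l * (c k * G k l))); last by move=> k; ring.
    rewrite bsum_scale; ring.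
  rewrite exchange_big.
  apply: eq_bigr => k _.
  rewrite -[LHS](@bsum_ext _ (fun l => c k * (G k l * y l))); last by move=> l; ring.
  by rewrite bsum_scale.
Qed.

Lemma comb_swap (I J : finType) (q : J -> R) (c : J -> I -> R) (f : I -> R) :
  bs I (fun k => bs J (fun ij => q ij * c ij k) * f k) = bs J (fun ij => q ij * bs I (fun k => c ij k * f k)).
Proof.
  rewrite (eq_bigr (fun k => bs J (fun ij => q ij * c ij k * f k))); last first.
    move=> k _; rewrite -[RHS](@bsum_ext _ (fun ij => f k * (q ij * c ij k))); last by move=> ij; ring.
    rewrite bsum_scale; ring.
  rewrite exchange_big.
  apply: eq_bigr => ij _.
  rewrite -[LHS](@bsum_ext _ (fun k => q ij * (c ij k * f k))); last by move=> k; ring.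
  by rewrite bsum_scale.
Qed.

Definition feas (I : finType) n (G : I -> 'I_n -> R) (h : I -> R) :=
  exists y : 'I_n -> R, forall i, sumI (fun l => G i l * y l) <= h i.

Definition lcons n (t : R) (y : 'I_n -> R) : 'I_n.+1 -> R :=
  fun l => if unlift ord0 l is Some l' then y l' else t.
Arguments lcons {n}.
Arguments feas {I n}.

Lemma sumI_lcons n (f : 'I_n.+1 -> R) t y :
  sumI (fun l => f l * lcons t y l) = f ord0 * t + sumI (fun l => f (lift ord0 l) * y l).
Proof.
  rewrite sumI_recl /lcons unlift_none; congr (_ + _).
  apply: sumI_ext => l; by rewrite liftK.
Qed.

Theorem farkas n : forall (I : finType) (G : I -> 'I_n -> R) (h : I -> R),
  ~ feas G h -> exists p : I -> R, (forall i, 0 <= p i) /\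
    (forall l, bs I (fun i => p i * G i l) = 0) /\ bs I (fun i => p i * h i) < 0.
Proof.
  elim: n => [|n IH] I G h Hnf.
  - have : ~ (forall i, 0 <= h i).
      move=> H; apply: Hnf; exists (fun _ => 0) => i.
      rewrite /sumI big_ord0; exact: H.
    move=> /not_all_ex_not [i Hi].
    exists (fun k => if k == i then 1 else 0); split; first by move=> k; case: (k == i); lra.
    split; first by case.
    rewrite (@bsum_ext _ _ (fun k => if k == i then h k else 0)); last by move=> k; case: (k == i); ring.
    rewrite bsum_single; lra.
  - pose G' := fun (ij : I * I) (l : 'I_n) => bs I (fun k => coef G ij k * G k (lift ord0 l)).
    pose h' := fun (ij : I * I) => bs I (fun k => coef G ij k * h k).
    have Hnf' : ~ feas G' h'.
      case=> y' Hy'.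
      pose r := fun i => sumI (fun l => G i (lift ord0 l) * y' l).
      have Hrow : forall ij, bs I (fun k => coef G ij k * r k) <= bs I (fun k => coef G ij k * h k).
        move=> ij; have := Hy' ij; rewrite /G' lin_comb //.
      have Hpair : forall i j, 0 < gg G i -> gg G j < 0 ->
          - gg G j * r i + gg G i * r j <= - gg G j * h i + gg G i * h j.
        move=> i j Hi Hj; have := Hrow (i, j); rewrite !sum_coef /=.
        case: Rlt_dec => // _ /=; case: Rlt_dec => // _.
      have Hzero : forall i, gg G i = 0 -> r i <= h i.
        move=> i Hi; have := Hrow (i, i); rewrite !sum_coef /=.
        case: Rlt_dec => [H|_ /=]; first lra.
        rewrite eqxx; case: Req_EM_T => //.
      case: (@sep_bounds I (fun i => 0 < gg G i) (fun j => gg G j < 0)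
               (fun i => (h i - r i) / gg G i) (fun j => (h j - r j) / gg G j)).
        move=> i j /= Hi Hj.
        have := Hpair i j Hi Hj.
        set a := gg G i in Hi *; set b := gg G j in Hj *.
        have E1 : (h j - r j) / b * b = h j - r j by field; lra.
        have E2 : (h i - r i) / a * a = h i - r i by field; lra.
        set l := (h j - r j) / b in E1 *; set u := (h i - r i) / a in E2 *.
        move=> Hp.
        have H3 : 0 <= a * (- b) * (u - l) by nra.
        have H4 : 0 < a * (- b) by nra.
        apply: (Rmult_le_reg_l (a * - b)) => //; lra.
      move=> t [Ht1 Ht2].
      apply: Hnf; exists (lcons t y') => i.
      rewrite sumI_lcons -/(r i) -/(gg G i).
      case: (Rtotal_order 0 (gg G i)) => [Hp|[Hz|Hn]].
      + have := Ht1 i Hp.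
        have E : (h i - r i) / gg G i * gg G i = h i - r i by field; lra.
        move: E; set u := (h i - r i) / gg G i => E Hu; nra.
      + rewrite -Hz; have := Hzero i (esym Hz); lra.
      + have := Ht2 i Hn.
        have E : (h i - r i) / gg G i * gg G i = h i - r i by field; lra.
        move: E; set u := (h i - r i) / gg G i => E Hu; nra.
    case: (IH _ G' h' Hnf') => q [Hq0 [Hq1 Hq2]].
    exists (fun k => bs (I * I)%type (fun ij => q ij * coef G ij k)).
    split; first by move=> k; apply: bsum_ge0 => ij; apply: Rmult_le_pos; [exact: Hq0|exact: coef_ge0].
    split.
    + move=> l; rewrite comb_swap.
      case: (unliftP ord0 l) => [l' ->|->].
      * rewrite -[RHS](Hq1 l'); apply: bsum_ext => ij; done.
      * apply: bsum_zero => ij; rewrite (sum_coef G ij (fun k => G k ord0)) /=.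
        rewrite -/(gg G ij.1) -/(gg G ij.2).
        case: Rlt_dec => _ /=; [case: Rlt_dec => _ /=; ring|].
        case: (ij.1 == ij.2); last ring.
        case: Req_EM_T => H /=; [rewrite H|]; ring.
    + rewrite comb_swap; exact: Hq2.
Qed.

Lemma lp_dual m n2 (B : mat m n2) (d : vec n2) (b : vec m) (beta : R) :
  (exists y0 : vec n2, forall i, mulmv B y0 i >= b i) ->
  (forall w, Wset B d w -> dot w b <= beta) ->
  exists y : vec n2, (forall i, mulmv B y i >= b i) /\ dot d y <= beta.
Proof.
  move=> [y0 Hy0] HW.
  apply: NNPP => Hno.
  pose G := fun (k : 'I_m.+1) (l : 'I_n2) => if unlift ord0 k is Some i then - B i l else d l.
  pose h := fun (k : 'I_m.+1) => if unlift ord0 k is Some i then - b i else beta.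
  have Hnf : ~ feas G h.
    case=> y Hy; apply: Hno; exists y; split.
    - move=> i; have := Hy (lift ord0 i); rewrite /G /h liftK.
      rewrite /mulmv (@sumI_ext _ (fun l => - B i l * y l) (fun l => - (B i l * y l))); last by move=> l; ring.
      rewrite sumI_opp; lra.
    - have := Hy ord0; rewrite /G /h unlift_none //.
  case: (@farkas _ _ G h Hnf) => p [Hp0 [Hp1 Hp2]].
  pose t := p ord0; pose w := fun i => p (lift ord0 i).
  have Hcol : forall l, t * d l - sumI (fun i => w i * B i l) = 0.
    move=> l; have := Hp1 l; rewrite (big_ord_recl) /G unlift_none -/t.
    rewrite (@eq_bigr _ _ _ _ _ _ _ (fun i => - (w i * B i l))); last by move=> i _; rewrite liftK /w; ring.
    rewrite -/(sumI (fun i => - (w i * B i l))) sumI_opp; lra.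
  have Hval : t * beta - dot w b < 0.
    move: Hp2; rewrite (big_ord_recl) /h unlift_none -/t.
    rewrite (@eq_bigr _ _ _ _ _ _ _ (fun i => - (w i * b i))); last by move=> i _; rewrite liftK /w; ring.
    rewrite -/(sumI (fun i => - (w i * b i))) sumI_opp /dot; lra.
  have Ht : 0 <= t by exact: Hp0.
  have Hw : forall i, 0 <= w i by move=> i; exact: Hp0.
  case: (Rle_lt_or_eq_dec 0 t Ht) => [Htp|Ht0].
  - have HWw : Wset B d (fun i => w i / t).
      split; first by move=> i; apply: Rmult_le_pos; [exact: Hw| apply: Rlt_le; apply: Rinv_0_lt_compat].
      move=> j; rewrite (@sumI_ext _ _ (fun i => / t * (w i * B i j))); last by move=> i; rewrite /Rdiv; ring.
      rewrite sumI_scale; have := Hcol j; move=> Hc.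
      have -> : sumI (fun i => w i * B i j) = t * d j by lra.
      field; lra.
    have := HW _ HWw.
    rewrite /dot (@sumI_ext _ _ (fun i => / t * (w i * b i))); last by move=> i; rewrite /Rdiv; ring.
    rewrite sumI_scale -/(dot w b) => H.
    have : dot w b <= t * beta.
      have E : dot w b = t * (/ t * dot w b) by field; lra.
      rewrite E; apply: Rmult_le_compat_l; lra.
    lra.
  -
    have Hc0 : forall l, sumI (fun i => w i * B i l) = 0 by move=> l; have := Hcol l; rewrite -Ht0; lra.
    have : dot w b <= 0.
      apply: (Rle_trans _ (sumI (fun i => w i * mulmv B y0 i))).
        apply: sumI_le => i; apply: Rmult_le_compat_l; [exact: Hw | have := Hy0 i; lra].
      rewrite /mulmv.
      rewrite (@sumI_ext _ _ (fun i => sumI (fun l => w i * B i l * y0 l))); last first.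
        by move=> i; rewrite -sumI_scale; apply: sumI_ext => l; ring.
      rewrite sumI_exch (@sumI_ext _ _ (fun l => sumI (fun i => w i * B i l) * y0 l)); last first.
        by move=> l; rewrite -sumI_scale_r.
      rewrite (@sumI_ext _ _ (fun l => 0)); last by move=> l; rewrite Hc0; ring.
      rewrite sumI_zero //; lra.
    rewrite -Ht0 in Hval; lra.
Qed.

Definition posc m (w : vec m) : nat := (\sum_(i < m) (if Rlt_dec 0 (w i) then 1 else 0))%N.
Arguments posc {m}.

Lemma dot_add n (a b c : vec n) : dot (fun i => a i + b i) c = dot a c + dot b c.
Proof. rewrite /dot -sumI_add; apply: sumI_ext => i; ring. Qed.
Lemma dot_scale n t (a c : vec n) : dot (fun i => t * a i) c = t * dot a c.
Proof. rewrite /dot -sumI_scale; apply: sumI_ext => i; ring. Qed.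

Section Ext.
Variables (m n2 : nat) (B : mat m n2) (d : vec n2) (b : vec m).
Hypothesis Hrec : forall dl : vec m, (forall i, 0 <= dl i) ->
  (forall j, sumI (fun i => B i j * dl i) = 0) -> dot dl b <= 0.

Lemma step_dir (w : vec m) (tau : vec m) :
  Wset B d w -> (forall j, sumI (fun i => B i j * tau i) = 0) ->
  (forall i, tau i <> 0 -> 0 < w i) -> 0 <= dot tau b -> (exists i, tau i < 0) ->
  exists w', Wset B d w' /\ dot w b <= dot w' b /\ (posc w' < posc w)%N.
Proof.
  move=> [Hw0 HwB] HtB Hsupp Hobj Hneg.
  case: (@argmin_fin _ (fun i => tau i < 0) (fun i => w i / (- tau i)) Hneg) => i0 [Hi0 Hmin].
  pose th := w i0 / (- tau i0).
  have Hw0i : 0 < w i0 by apply: Hsupp; lra.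
  have Hth : 0 < th by apply: Rdiv_lt_0_compat; lra.
  pose w' := fun i => w i + th * tau i.
  have Hw'0 : forall i, 0 <= w' i.
    move=> i; rewrite /w'.
    case: (Rlt_le_dec (tau i) 0) => Hti.
    - have := Hmin i Hti; rewrite -/th => H.
      have E : w i / - tau i * - tau i = w i by field; lra.
      have : th * - tau i <= w i / - tau i * - tau i by apply: Rmult_le_compat_r; lra.
      lra.
    - have H1 := Hw0 i; have H2 : 0 <= th * tau i by apply: Rmult_le_pos; lra.
      lra.
  exists w'; split; [split|split].
  - exact: Hw'0.
  - move=> j; rewrite /w' (@sumI_ext _ _ (fun i => B i j * w i + th * (B i j * tau i))); last by move=> i; ring.
    rewrite sumI_add sumI_scale HtB HwB; ring.
  - rewrite /w' dot_add dot_scale; have : 0 <= th * dot tau b by apply: Rmult_le_pos; lra. lra.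
  - rewrite /posc (bigD1 i0) //= (bigD1 i0 (P := predT)) //=.
    have -> : (if Rlt_dec 0 (w' i0) then 1 else 0)%N = 0%N.
      case: Rlt_dec => // H; exfalso.
      have : w' i0 = 0 by rewrite /w' /th; field; lra.
      lra.
    destruct (Rlt_dec 0 (w i0)) as [Hc0|Hc]; last lra.
    rewrite add0n ltnS /=.
    apply: leq_sum => i _.
    destruct (Rlt_dec 0 (w' i)) as [H|H]; destruct (Rlt_dec 0 (w i)) as [H'|H'] => //; exfalso.
    have Hwi : w i = 0 by have := Hw0 i; lra.
    have : tau i = 0 by apply: NNPP => Hne; have := Hsupp i Hne; lra.
    move: H; rewrite /w' Hwi => H Ht; rewrite Ht in H; lra.
Qed.

Lemma dir_ok (w sg : vec m) :
  Wset B d w -> (forall j, sumI (fun i => B i j * sg i) = 0) ->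
  (forall i, sg i <> 0 -> 0 < w i) -> 0 <= dot sg b -> (exists i, sg i <> 0) ->
  exists w', Wset B d w' /\ dot w b <= dot w' b /\ (posc w' < posc w)%N.
Proof.
  move=> Hw HB Hs Ho [i1 Hi1].
  case: (classic (exists i, sg i < 0)) => [Hn|Hnn].
    exact: (@step_dir w sg Hw HB Hs Ho Hn).
  have Hge : forall i, 0 <= sg i.
    move=> i; apply: Rnot_lt_le => H; apply: Hnn; by exists i.
  have H0 := Hrec sg Hge HB.
  apply: (@step_dir w (fun i => - sg i) Hw).
  - move=> j; rewrite (@sumI_ext _ _ (fun i => - (B i j * sg i))); last by move=> i; ring.
    rewrite sumI_opp HB; ring.
  - move=> i Hi; apply: Hs => H; apply: Hi; rewrite H; ring.
  - have E : dot (fun i => - sg i) b = - dot sg b.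
      rewrite /dot -sumI_opp; apply: sumI_ext => i; ring.
    rewrite E; lra.
  - exists i1; have := Hge i1; lra.
Qed.

Lemma not_ext_dir (w : vec m) : Wset B d w -> ~ extreme_point (Wset B d) w ->
  exists w', Wset B d w' /\ dot w b <= dot w' b /\ (posc w' < posc w)%N.
Proof.
  move=> Hw Hne.
  have [a [c [t [Ha [Hc [Ht [Hwe Hn]]]]]]] : exists a c t, Wset B d a /\ Wset B d c /\ 0 < t < 1 /\
      w = vadd (vscale t a) (vscale (1 - t) c) /\ ~ (a = w /\ c = w).
    apply: NNPP => H; apply: Hne; split=> // a c t Ha Hc Ht He.
    apply: NNPP => Hn; apply: H; by exists a, c, t.
  have Hwe' : forall i, w i = t * a i + (1 - t) * c i by move=> i; rewrite Hwe.
  have Haw : a <> w.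
    move=> Eaw; apply: Hn; split=> //.
    apply: functional_extensionality => i; have := Hwe' i; rewrite Eaw.
    move=> H; apply: (Rmult_eq_reg_l (1 - t)); [lra | lra].
  have [i1 Hi1] : exists i, a i - w i <> 0.
    apply: NNPP => H; apply: Haw; apply: functional_extensionality => i.
    apply: NNPP => H2; apply: H; exists i; lra.
  case: Hw => Hw0 HwB; case: Ha => Ha0 HaB; case: Hc => Hc0 HcB.
  have HBd : forall j, sumI (fun i => B i j * (a i - w i)) = 0.
    move=> j; rewrite (@sumI_ext _ _ (fun i => B i j * a i - B i j * w i)); last by move=> i; ring.
    rewrite sumI_sub HaB HwB; ring.
  have Hsup : forall i, a i - w i <> 0 -> 0 < w i.
    move=> i Hi; case: (Rle_lt_or_eq_dec 0 (w i) (Hw0 i)) => // H.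
    exfalso; apply: Hi; have := Hwe' i; have := Ha0 i; have := Hc0 i; move=> h1 h2 h3.
    have : t * a i = 0.
      have : 0 <= t * a i by apply: Rmult_le_pos; lra.
      have : 0 <= (1 - t) * c i by apply: Rmult_le_pos; lra.
      lra.
    move=> H4; have : a i = 0.
      case: (Rmult_integral _ _ H4) => //; lra.
    lra.
  case: (Rle_lt_dec 0 (dot (fun i => a i - w i) b)) => Hob.
  - apply: (@dir_ok w (fun i => a i - w i)) => //; by exists i1.
  - apply: (@dir_ok w (fun i => - (a i - w i))) => //.
    + move=> j; rewrite (@sumI_ext _ _ (fun i => - (B i j * (a i - w i)))); last by move=> i; ring.
      rewrite sumI_opp HBd; ring.
    + move=> i Hi; apply: Hsup => H; apply: Hi; rewrite H; ring.
    + have E : dot (fun i => - (a i - w i)) b = - dot (fun i => a i - w i) b.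
        rewrite /dot -sumI_opp; apply: sumI_ext => i; ring.
      rewrite E; lra.
    + exists i1; lra.
Qed.

Lemma ext_reduce_k k : forall w, (posc w <= k)%N -> Wset B d w ->
  exists e, extreme_point (Wset B d) e /\ dot w b <= dot e b.
Proof.
  elim: k => [|k IH] w Hk Hw;
    (case: (classic (extreme_point (Wset B d) w)) => [He|Hne]; [exists w; split=> //; lra|]);
    case: (@not_ext_dir w Hw Hne) => w' [Hw' [Hob Hp]].
  - by move: (leq_trans Hp Hk).
  - have Hk' : (posc w' <= k)%N by rewrite -ltnS; exact: (leq_trans Hp Hk).
    case: (IH w' Hk' Hw') => e [He Hoe]; exists e; split=> //; lra.
Qed.

Lemma ext_reduce w : Wset B d w -> exists e, extreme_point (Wset B d) e /\ dot w b <= dot e b.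
Proof. exact: (@ext_reduce_k (posc w) w (leqnn _)). Qed.
End Ext.

Lemma sumI_prod n p (f : 'I_n -> R) (g : 'I_p -> R) :
  sumI (fun i => sumI (fun j => f i * g j)) = sumI f * sumI g.
Proof.
  rewrite -sumI_scale_r; apply: sumI_ext => i; by rewrite sumI_scale.
Qed.

Lemma sumI_split_in n p q (f : 'I_n -> 'I_(p + q) -> R) :
  sumI (fun i => sumI (f i)) =
  sumI (fun i => sumI (fun a => f i (lshift q a))) + sumI (fun i => sumI (fun b => f i (rshift p b))).
Proof. rewrite -sumI_add; apply: sumI_ext => i; exact: sumI_split. Qed.
Arguments sumI_split_in {n p q}.

Lemma qform_split p q (M : mat (p + q) (p + q)) (z : vec (p + q)) :
  qform M z =
    sumI (fun a => sumI (fun a' => z (lshift q a) * M (lshift q a) (lshift q a') * z (lshift q a')))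
  + sumI (fun a => sumI (fun b => z (lshift q a) * M (lshift q a) (rshift p b) * z (rshift p b)))
  + sumI (fun b => sumI (fun a => z (rshift p b) * M (rshift p b) (lshift q a) * z (lshift q a)))
  + sumI (fun b => sumI (fun b' => z (rshift p b) * M (rshift p b) (rshift p b') * z (rshift p b'))).
Proof.
  rewrite /qform sumI_split.
  rewrite (sumI_split_in (fun a j => z (lshift q a) * M (lshift q a) j * z j)).
  rewrite (sumI_split_in (fun b j => z (rshift p b) * M (rshift p b) j * z j)).
  ring.
Qed.

Section QF.
Variables (m n1 n2 K : nat) (A : mat m n1) (B : mat m n2) (d : vec n2) (F : mat m K.+1).
Variables (x : vec n1) (lam : R) (Lam : mat (K.+1 + m) n2) (rho : R) (z : vec (K.+1 + m)).
Let u := fun a => z (lshift m a).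
Let w := fun b => z (rshift K.+1 b).

Lemma qform_lin :
  qform (Mbar A B d F x lam Lam rho) z =
    lam * qform (@g1g1T m K) z + (- / 2) * qform (Gx A F x) z
    + / 2 * qform (fun i j => LamE B d Lam j i) z + / 2 * qform (LamE B d Lam) z
    + rho * qform (fun i j => if i == j then 1 else 0) z.
Proof.
  rewrite /qform /Mbar.
  rewrite -!sumI_scale -!sumI_add; apply: sumI_ext => i.
  rewrite -!sumI_scale -!sumI_add; apply: sumI_ext => j.
  ring.
Qed.

Lemma qform_g : qform (@g1g1T m K) z = u ord0 * u ord0.
Proof.
  rewrite qform_split.
  have -> : sumI (fun a => sumI (fun a' => z (lshift m a) * g1g1T (lshift m a) (lshift m a') * z (lshift m a')))
      = sumI (fun a => if a == ord0 then sumI (fun a' => if a' == ord0 then u a * u a' else 0) else 0).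
    apply: sumI_ext => a; rewrite /g1g1T.
    case: (a =P ord0) => Ha.
    - apply: sumI_ext => a'; rewrite !split_l Ha eqxx /=; case: (a' == ord0); rewrite /u; ring.
    - apply: sumI_zero => a'; rewrite !split_l; move/eqP/negbTE: Ha => -> /=; ring.
  rewrite (@sumI_ext _ (fun a => if a == ord0 then _ else 0) (fun a => if a == ord0 then u a * u ord0 else 0)); last first.
    move=> a; case: (a == ord0) => //; exact: sumI_single.
  rewrite sumI_single.
  rewrite (@sumI_zero _ (fun a => sumI _)); last first.
    move=> a; apply: sumI_zero => b; rewrite /g1g1T split_l split_r; ring.
  rewrite (@sumI_zero _ (fun b => sumI _)); last first.
    move=> b; apply: sumI_zero => a; rewrite /g1g1T split_l split_r; ring.
  rewrite (@sumI_zero _ (fun b => sumI _)); last first.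
    move=> b; apply: sumI_zero => a; rewrite /g1g1T split_r; ring.
  ring.
Qed.

Lemma qform_G : qform (Gx A F x) z = 2 * sumI (fun b => w b * sumI (fun a => FAx A F x b a * u a)).
Proof.
  rewrite qform_split.
  rewrite (@sumI_zero _ (fun a => sumI (fun a' => _))); last first.
    move=> a; apply: sumI_zero => a'; rewrite /Gx !split_l; ring.
  rewrite [X in _ + _ + _ + X](@sumI_zero _ (fun b => sumI (fun b' => _))); last first.
    move=> b; apply: sumI_zero => b'; rewrite /Gx !split_r; ring.
  rewrite (@sumI_ext _ (fun a => sumI (fun b => _)) (fun a => sumI (fun b => w b * FAx A F x b a * u a))); last first.
    move=> a; apply: sumI_ext => b; rewrite /Gx split_l split_r /u /w; ring.
  rewrite (@sumI_ext _ (fun b => sumI (fun a => z (rshift _ b) * _ * _)) (fun b => sumI (fun a => w b * FAx A F x b a * u a))); last first.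
    move=> b; apply: sumI_ext => a; rewrite /Gx split_l split_r /u /w; ring.
  rewrite sumI_exch.
  rewrite (@sumI_ext _ (fun b => sumI (fun a => w b * FAx A F x b a * u a)) (fun b => w b * sumI (fun a => FAx A F x b a * u a))); last first.
    move=> b; rewrite -sumI_scale; apply: sumI_ext => a; ring.
  ring.
Qed.

Lemma qform_T (M : mat (K.+1 + m) (K.+1 + m)) : qform (fun i j => M j i) z = qform M z.
Proof.
  rewrite /qform sumI_exch; apply: sumI_ext => i; apply: sumI_ext => j; ring.
Qed.

Lemma qform_L : qform (LamE B d Lam) z =
  sumI (fun l => sumI (fun i => z i * Lam i l) * sumI (fun j => Emat B d l j * z j)).
Proof.
  rewrite /qform /LamE.
  rewrite (@sumI_ext _ _ (fun i => sumI (fun l => sumI (fun j => z i * Lam i l * (Emat B d l j * z j))))); last first.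
    move=> i; rewrite (@sumI_ext _ _ (fun j => sumI (fun l => z i * Lam i l * (Emat B d l j * z j)))); last first.
      move=> j; symmetry.
      rewrite (@sumI_ext _ _ (fun l => (z i * z j) * (Lam i l * Emat B d l j))); last by move=> l; ring.
      rewrite sumI_scale; ring.
    exact: sumI_exch.
  rewrite sumI_exch; apply: sumI_ext => l.
  by rewrite sumI_prod.
Qed.

Lemma qform_I : qform (fun i j => if i == j then 1 else 0) z =
  sumI (fun a => u a * u a) + sumI (fun b => w b * w b).
Proof.
  rewrite /qform.
  rewrite (@sumI_ext _ _ (fun i => z i * z i)); last first.
    move=> i; rewrite (@sumI_ext _ _ (fun j => if j == i then z i * z j else 0)); last first.
      move=> j; have [E|Hne] := eqVneq i j; ring.
    by rewrite sumI_single.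
  by rewrite sumI_split.
Qed.

Lemma Ez_eq l : sumI (fun j => Emat B d l j * z j) = - d l * u ord0 + sumI (fun b => B b l * w b).
Proof.
  rewrite sumI_split; congr (_ + _).
  - rewrite (@sumI_ext _ _ (fun a => if a == ord0 then - d l * u a else 0)); last first.
      move=> a; rewrite /Emat split_l /u; case: (a == ord0); ring.
    by rewrite sumI_single.
  - apply: sumI_ext => b; rewrite /Emat split_r //.
Qed.

Lemma FAx_eq b : sumI (fun a => FAx A F x b a * u a) = mulmv F u b - mulmv A x b * u ord0.
Proof.
  rewrite /FAx /mulmv.
  rewrite (@sumI_ext _ _ (fun a => F b a * u a - (if a == ord0 then mulmv A x b * u a else 0))); last first.
    move=> a; case: (a == ord0); rewrite /mulmv; ring.
  by rewrite sumI_sub sumI_single.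
Qed.

Lemma qform_Mbar :
  qform (Mbar A B d F x lam Lam rho) z =
    lam * (u ord0 * u ord0)
    - sumI (fun b => w b * (mulmv F u b - mulmv A x b * u ord0))
    + sumI (fun l => sumI (fun i => z i * Lam i l) * (- d l * u ord0 + sumI (fun b => B b l * w b)))
    + rho * (sumI (fun a => u a * u a) + sumI (fun b => w b * w b)).
Proof.
  rewrite qform_lin qform_g qform_G qform_T qform_L qform_I.
  rewrite (@sumI_ext _ (fun b => w b * _) (fun b => w b * (mulmv F u b - mulmv A x b * u ord0))); last first.
    by move=> b; rewrite FAx_eq.
  rewrite (@sumI_ext _ (fun l => _ * sumI _) (fun l => sumI (fun i => z i * Lam i l) * (- d l * u ord0 + sumI (fun b => B b l * w b)))); last first.
    by move=> l; rewrite Ez_eq.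
  field.
Qed.
End QF.

Lemma abs_le_sq (x : R) : Rabs x <= 1 + x * x.
Proof. case: (Rcase_abs x) => H; [rewrite Rabs_left //| rewrite Rabs_right //]; nra. Qed.

Lemma coord_bound n (u : vec n) (M : R) i : dot u u <= M -> Rabs (u i) <= 1 + M.
Proof.
  move=> H; have := abs_le_sq (u i).
  have : u i * u i <= dot u u.
    apply: (@sumI_term _ (fun j => u j * u j)) => j; nra.
  lra.
Qed.

Lemma grid_rep (n : nat) (S : vec n -> Prop) (f : vec n -> R) (M delta : R) :
  0 < delta -> (forall u, S u -> dot u u <= M) ->
  exists Y, exists rep : vec n -> vec n, forall u, S u ->
    S (rep u) /\ (forall i, Rabs (u i - rep u i) < delta) /\ f (rep u) <= Y.
Proof.
  move=> Hd HM.
  pose C := 1 + M.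
  pose N := Z.to_nat (up (2 * C / delta + 1)).
  pose cz := fun (u : vec n) (i : 'I_n) => up ((u i + C) / delta).
  pose cell := fun (u : vec n) => [ffun i : 'I_n => (inord (Z.to_nat (cz u i)) : 'I_N.+1)].
  pose rep_of := fun k => epsilon (inhabits (fun _ : 'I_n => 0)) (fun v => S v /\ cell v = k).
  exists (\big[Rplus/0]_(k : {ffun 'I_n -> 'I_N.+1}) Rabs (f (rep_of k))).
  exists (fun u => rep_of (cell u)).
  have Hcz : forall u i, S u -> (0 <= cz u i)%Z /\ (Z.to_nat (cz u i) < N.+1)%N.
    move=> u i Su.
    have Hb := @coord_bound n u M i (HM u Su).
    have HC : Rabs (u i) <= C by [].
    have H0 : 0 <= (u i + C) / delta.
      apply: Rmult_le_pos; last by apply: Rlt_le; apply: Rinv_0_lt_compat.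
      move: HC; rewrite /Rabs; case: Rcase_abs; lra.
    have H1 : (u i + C) / delta <= 2 * C / delta.
      apply: Rmult_le_compat_r; first by apply: Rlt_le; apply: Rinv_0_lt_compat.
      move: HC; rewrite /Rabs; case: Rcase_abs; lra.
    have [A1 A2] := archimed ((u i + C) / delta).
    have [B1 B2] := archimed (2 * C / delta + 1).
    have Z1 : (0 < cz u i)%Z by apply: lt_IZR; rewrite /cz; lra.
    have Z2 : (cz u i < up (2 * C / delta + 1))%Z by apply: lt_IZR; rewrite /cz; lra.
    split; first lia.
    rewrite /N; apply/ltP; lia.
  move=> u Su.
  have Hex : exists v, S v /\ cell v = cell u by exists u.
  have [Sr Cr] := epsilon_spec (inhabits (fun _ : 'I_n => 0)) (fun v => S v /\ cell v = cell u) Hex.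
  rewrite -/(rep_of (cell u)) in Sr Cr.
  split => //; split.
  - move=> i.
    have Ei : cell (rep_of (cell u)) i = cell u i by rewrite Cr.
    rewrite !ffunE in Ei.
    have [P1 Q1] := Hcz _ i Sr; have [P2 Q2] := Hcz _ i Su.
    have Ei' : Z.to_nat (cz (rep_of (cell u)) i) = Z.to_nat (cz u i).
      have := congr1 (@nat_of_ord _) Ei; rewrite !inordK //.
    have Ez : cz (rep_of (cell u)) i = cz u i by lia.
    move: Ez; rewrite /cz => Ez.
    have [A1 A2] := archimed ((u i + C) / delta).
    have [B1 B2] := archimed ((rep_of (cell u) i + C) / delta).
    rewrite Ez in B1 B2.
    have ED : u i - rep_of (cell u) i = delta * ((u i + C) / delta - (rep_of (cell u) i + C) / delta).
      field; lra.
    have Hlo : -1 < (u i + C) / delta - (rep_of (cell u) i + C) / delta by lra.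
    have Hhi : (u i + C) / delta - (rep_of (cell u) i + C) / delta < 1 by lra.
    move: Hlo Hhi ED; set T := (_ / delta - _ / delta) => Hlo Hhi ED.
    apply: Rabs_def1; rewrite ED; nra.
  - apply: Rle_trans (Rle_abs _) _.
    exact: (@bsum_term _ (fun k => Rabs (f (rep_of k))) (cell u) (fun k => Rabs_pos _)).
Qed.

Definition join (p q : nat) (u : vec p) (w : vec q) : vec (p + q) :=
  fun k => match split k with inl a => u a | inr b => w b end.
Arguments join {p q}.

Lemma join_l p q (u : vec p) (w : vec q) a : join u w (lshift q a) = u a.
Proof. by rewrite /join split_l. Qed.
Lemma join_r p q (u : vec p) (w : vec q) b : join u w (rshift p b) = w b.
Proof. by rewrite /join split_r. Qed.

Section L.
Variables (m n1 n2 K : nat) (A : mat m n1) (B : mat m n2) (d : vec n2) (F : mat m K.+1).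
Variables (x : vec n1) (lam : R) (Lam : mat (K.+1 + m) n2) (rho : R).

Lemma qform_join (u : vec K.+1) (e : vec m) :
  u ord0 = 1 -> (forall l, sumI (fun b => B b l * e b) = d l) ->
  qform (Mbar A B d F x lam Lam rho) (join u e) =
    lam - dot e (fun b => mulmv F u b - mulmv A x b) + rho * (dot u u + dot e e).
Proof.
  move=> Hu0 He.
  rewrite qform_Mbar !join_l Hu0.
  rewrite [X in _ + X + _](@sumI_zero _ (fun l => _ * _)); last first.
    move=> l; rewrite (@sumI_ext _ (fun b => B b l * _) (fun b => B b l * e b)); last first.
      by move=> b; rewrite join_r.
    rewrite He; ring.
  have Hu : (fun a => join u e (lshift m a)) = u.
    apply: functional_extensionality => a; exact: join_l.
  rewrite Hu.
  rewrite (@sumI_ext _ (fun b => join u e (rshift _ b) * _) (fun b => e b * (mulmv F u b - mulmv A x b))); last first.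
    by move=> b; rewrite join_r; ring.
  rewrite (@sumI_ext _ (fun a => join u e (lshift _ a) * _) (fun a => u a * u a)); last first.
    by move=> a; rewrite join_l.
  rewrite (@sumI_ext _ (fun b => join u e (rshift _ b) * _) (fun b => e b * e b)); last first.
    by move=> b; rewrite join_r.
  rewrite /dot; ring.
Qed.
End L.

Lemma sumI_abs n (f : 'I_n -> R) : Rabs (sumI f) <= sumI (fun i => Rabs (f i)).
Proof.
  rewrite /sumI; apply: (big_ind2 (fun x y => Rabs x <= y)).
  - rewrite Rabs_R0; lra.
  - move=> x1 x2 y1 y2 H1 H2; apply: Rle_trans (Rabs_triang _ _) _; lra.
  - move=> i _; lra.
Qed.

Section U.
Variables (m n1 n2 K : nat) (A : mat m n1) (B : mat m n2) (d : vec n2) (F : mat m K.+1) (x : vec n1).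

Definition muE (mu : R) : mat (K.+1 + m) n2 := fun i l => mu * Emat B d l i.
Definition Ev (u : vec K.+1) (w : vec m) (l : 'I_n2) := - d l * u ord0 + sumI (fun b => B b l * w b).
Definition Qe (lam mu rho : R) (u : vec K.+1) (w : vec m) :=
  lam * (u ord0 * u ord0) - sumI (fun b => w b * (mulmv F u b - mulmv A x b * u ord0))
  + mu * sumI (fun l => Ev u w l * Ev u w l) + rho * (dot u u + dot w w).

Lemma qform_muE lam mu rho (z : vec (K.+1 + m)) :
  qform (Mbar A B d F x lam (muE mu) rho) z =
  Qe lam mu rho (fun a => z (lshift m a)) (fun b => z (rshift K.+1 b)).
Proof.
  rewrite qform_Mbar /Qe /dot.
  rewrite (@sumI_ext _ (fun l => sumI (fun i => z i * muE mu i l) * _)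
     (fun l => mu * (Ev (fun a => z (lshift m a)) (fun b => z (rshift K.+1 b)) l *
                     Ev (fun a => z (lshift m a)) (fun b => z (rshift K.+1 b)) l))); last first.
    move=> l; rewrite /muE.
    rewrite (@sumI_ext _ _ (fun i => mu * (Emat B d l i * z i))); last by move=> i; ring.
    rewrite sumI_scale Ez_eq /Ev; ring.
  rewrite sumI_scale; ring.
Qed.

Lemma mulmv_scale p q (M : mat p q) t (u : vec q) i : mulmv M (fun a => t * u a) i = t * mulmv M u i.
Proof. rewrite /mulmv -sumI_scale; apply: sumI_ext => a; ring. Qed.

Lemma Qe_hom lam mu rho t u w :
  Qe lam mu rho (fun a => t * u a) (fun b => t * w b) = t * t * Qe lam mu rho u w.
Proof.
  rewrite /Qe /dot.
  rewrite (@sumI_ext _ (fun b => t * w b * _) (fun b => (t * t) * (w b * (mulmv F u b - mulmv A x b * u ord0)))); last first.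
    move=> b; rewrite mulmv_scale; ring.
  rewrite (@sumI_ext _ (fun l => Ev _ _ l * _) (fun l => (t * t) * (Ev u w l * Ev u w l))); last first.
    move=> l; rewrite /Ev.
    rewrite (@sumI_ext _ (fun b => B b l * (t * w b)) (fun b => t * (B b l * w b))); last by move=> b; ring.
    rewrite sumI_scale; ring.
  rewrite (@sumI_ext _ (fun a => t * u a * (t * u a)) (fun a => (t * t) * (u a * u a))); last by move=> a; ring.
  rewrite (@sumI_ext _ (fun b => t * w b * (t * w b)) (fun b => (t * t) * (w b * w b))); last by move=> b; ring.
  rewrite !sumI_scale; ring.
Qed.
End U.
Arguments Qe {m n1 n2 K}. Arguments Ev {m n2 K}. Arguments muE {m n2 K}.

Lemma wd m n2 (B : mat m n2) (b : vec m) (y : vec n2) (w : vec m) :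
  (forall i, 0 <= w i) -> (forall i, mulmv B y i >= b i) ->
  dot w b <= sumI (fun l => sumI (fun i => B i l * w i) * y l).
Proof.
  move=> Hw Hy.
  apply: (Rle_trans _ (sumI (fun i => w i * mulmv B y i))).
    apply: sumI_le => i; apply: Rmult_le_compat_l; [exact: Hw | have := Hy i; lra].
  rewrite /mulmv.
  rewrite (@sumI_ext _ _ (fun i => sumI (fun l => w i * B i l * y l))); last first.
    by move=> i; rewrite -sumI_scale; apply: sumI_ext => l; ring.
  rewrite sumI_exch; apply: Req_le; apply: sumI_ext => l.
  rewrite -sumI_scale_r; apply: sumI_ext => i; ring.
Qed.

Section Core.
Variables (m n1 n2 K : nat) (A : mat m n1) (B : mat m n2) (d : vec n2) (F : mat m K.+1) (x : vec n1).

Lemma core_pos (u : vec K.+1) (w : vec m) (g : vec K.+1) (yg : vec n2) (s eps mu rho delta Y : R) :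
  u ord0 = 1 -> (forall b, 0 <= w b) ->
  (forall i, mulmv B yg i >= mulmv F g i - mulmv A x i) -> dot d yg <= s ->
  (forall a, Rabs (u a - g a) < delta) -> dot yg yg <= Y ->
  0 < eps -> 0 < rho -> 0 < mu -> Y / (4 * mu) <= eps / 4 ->
  sumI (fun b => (sumI (fun a => Rabs (F b a))) * (sumI (fun a => Rabs (F b a)))) * (delta * delta) <= eps * rho ->
  0 <= Qe A B d F x (s + eps / 2) mu rho u w.
Proof.
  move=> Hu0 Hw Hfeas Hs Hdel HY He Hr Hmu HYmu HFS.
  pose Dl := fun b => mulmv F u b - mulmv F g b.
  have HD : forall b, Dl b * Dl b <= (sumI (fun a => Rabs (F b a))) * (sumI (fun a => Rabs (F b a))) * (delta * delta).
    move=> b.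
    have E : Dl b = sumI (fun a => F b a * (u a - g a)).
      rewrite /Dl /mulmv -sumI_sub; apply: sumI_ext => a; ring.
    have H1 : Rabs (Dl b) <= sumI (fun a => Rabs (F b a)) * delta.
      rewrite E; apply: (Rle_trans _ _ _ (@sumI_abs _ _)).
      rewrite -sumI_scale_r; apply: sumI_le => a; rewrite Rabs_mult.
      apply: Rmult_le_compat_l; [exact: Rabs_pos| have := Hdel a; lra].
    have H2 : 0 <= Rabs (Dl b) by exact: Rabs_pos.
    have H3 : Dl b * Dl b = Rabs (Dl b) * Rabs (Dl b) by rewrite -Rabs_mult Rabs_right //; nra.
    rewrite H3.
    have := Rmult_le_compat _ _ _ _ H2 H2 H1 H1; lra.
  have HwB : sumI (fun b => w b * (mulmv F g b - mulmv A x b)) <=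
             sumI (fun l => Ev B d u w l * yg l) + s.
    have := @wd m n2 B (fun b => mulmv F g b - mulmv A x b) yg w Hw Hfeas.
    rewrite /dot => H; apply: Rle_trans H _.
    rewrite (@sumI_ext _ _ (fun l => Ev B d u w l * yg l + d l * yg l)); last first.
      move=> l; rewrite /Ev Hu0; ring.
    rewrite sumI_add; move: Hs; rewrite /dot; lra.
  have Hsplit : sumI (fun b => w b * (mulmv F u b - mulmv A x b * u ord0)) =
      sumI (fun b => w b * (mulmv F g b - mulmv A x b)) + sumI (fun b => w b * Dl b).
    rewrite -sumI_add; apply: sumI_ext => b; rewrite /Dl Hu0; ring.
  have Hl : - (dot yg yg) / (4 * mu) <= sumI (fun l => mu * (Ev B d u w l * Ev B d u w l) - Ev B d u w l * yg l).
    rewrite /dot.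
    have -> : - sumI (fun i => yg i * yg i) / (4 * mu) = sumI (fun l => - (yg l * yg l) / (4 * mu)).
      rewrite /Rdiv -sumI_opp -sumI_scale_r; apply: sumI_ext => l; ring.
    apply: sumI_le => l; exact: amgm.
  have Hb : - sumI (fun b => Dl b * Dl b) / (4 * rho) <= sumI (fun b => rho * (w b * w b) - w b * Dl b).
    have -> : - sumI (fun b => Dl b * Dl b) / (4 * rho) = sumI (fun b => - (Dl b * Dl b) / (4 * rho)).
      rewrite /Rdiv -sumI_opp -sumI_scale_r; apply: sumI_ext => l; ring.
    apply: sumI_le => b; exact: amgm.
  have HDs : sumI (fun b => Dl b * Dl b) <= eps * rho.
    apply: Rle_trans HFS; rewrite -sumI_scale_r; apply: sumI_le => b; exact: HD.
  have HDs' : sumI (fun b => Dl b * Dl b) / (4 * rho) <= eps / 4.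
    apply: (Rmult_le_reg_r (4 * rho)); first lra.
    have E1 : sumI (fun b => Dl b * Dl b) / (4 * rho) * (4 * rho) = sumI (fun b => Dl b * Dl b) by field; lra.
    rewrite E1; nra.
  have HYs : dot yg yg / (4 * mu) <= eps / 4.
    apply: Rle_trans HYmu; apply: Rmult_le_compat_r; last exact: HY.
    apply: Rlt_le; apply: Rinv_0_lt_compat; lra.
  have Huu : 0 <= dot u u by apply: sumI_ge0 => a; nra.
  rewrite /Qe Hsplit.
  have Hww : rho * dot w w - sumI (fun b => w b * Dl b) = sumI (fun b => rho * (w b * w b) - w b * Dl b).
    rewrite sumI_sub /dot sumI_scale //.
  have Hmm : mu * sumI (fun l => Ev B d u w l * Ev B d u w l) - sumI (fun l => Ev B d u w l * yg l)
           = sumI (fun l => mu * (Ev B d u w l * Ev B d u w l) - Ev B d u w l * yg l).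
    rewrite sumI_sub sumI_scale //.
  rewrite Hu0.
  have E2 : - (dot yg yg) / (4 * mu) = - (dot yg yg / (4 * mu)) by rewrite /Rdiv; ring.
  have E3 : - sumI (fun b => Dl b * Dl b) / (4 * rho) = - (sumI (fun b => Dl b * Dl b) / (4 * rho)) by rewrite /Rdiv; ring.
  have Hrr : 0 <= rho * dot u u by apply: Rmult_le_pos; lra.
  lra.
Qed.
End Core.

Lemma uhat_zero K (Uhat : vec K.+1 -> Prop) (HUv : vconvex Uhat) (HUk : vcone Uhat)
  (u0 : vec K.+1) (Hu0 : Uset Uhat u0) (MU : R) (HMU : forall u, Uset Uhat u -> dot u u <= MU)
  (v : vec K.+1) : Uhat v -> v ord0 = 0 -> forall i, v i = 0.
Proof.
  move=> Hv Hv0 i; apply: NNPP => Hvi.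
  have Hline : forall t, 0 <= t -> Uset Uhat (fun a => u0 a + t * v a).
    move=> t Ht.
    have H2u : Uhat (vscale 2 u0) by apply: HUk; [case: Hu0| lra].
    have H2v : Uhat (vscale (2 * t) v) by apply: HUk; [| lra].
    have := HUv _ _ (/ 2) H2u H2v ltac:(lra).
    have -> : vadd (vscale (/ 2) (vscale 2 u0)) (vscale (1 - / 2) (vscale (2 * t) v)) = (fun a => u0 a + t * v a).
      apply: functional_extensionality => a; rewrite /vadd /vscale; field.
    move=> H; split=> //; case: Hu0 => _ ->; rewrite Hv0; ring.
  pose t := (Rabs (u0 i) + Rabs MU + 2) / Rabs (v i).
  have Hav : 0 < Rabs (v i) by apply: Rabs_pos_lt.
  have Ht : 0 <= t by apply: Rmult_le_pos; [have := Rabs_pos (u0 i); have := Rabs_pos MU; lra| apply: Rlt_le; apply: Rinv_0_lt_compat].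
  have Hb := @coord_bound _ _ MU i (HMU _ (Hline t Ht)).
  have Etv : Rabs (t * v i) = Rabs (u0 i) + Rabs MU + 2.
    rewrite Rabs_mult (Rabs_right t); last lra.
    rewrite /t; field; lra.
  have Htri : Rabs (t * v i) <= Rabs (u0 i + t * v i) + Rabs (u0 i).
    have E : t * v i = (u0 i + t * v i) + (- u0 i) by ring.
    rewrite {1}E; apply: Rle_trans (Rabs_triang _ _) _; rewrite Rabs_Ropp; lra.
  have := Rle_abs MU; lra.
Qed.

Lemma Mbar_sym m n1 n2 K (A : mat m n1) (B : mat m n2) (d : vec n2) (F : mat m K.+1) x lam Lam rho i j :
  Mbar A B d F x lam Lam rho i j = Mbar A B d F x lam Lam rho j i.
Proof.
  rewrite /Mbar /g1g1T /Gx eq_sym.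
  have -> : (if (split i) is inl a then if (split j) is inl b then (if (a == ord0) && (b == ord0) then 1 else 0) else 0 else 0)
     = (if (split j) is inl a then if (split i) is inl b then (if (a == ord0) && (b == ord0) then 1 else 0) else 0 else 0).
    case: (split i) => a; case: (split j) => b //; by rewrite andbC.
  have -> : (match split i, split j with | inl a, inr b => FAx A F x b a | inr b, inl a => FAx A F x b a | _, _ => 0 end)
     = (match split j, split i with | inl a, inr b => FAx A F x b a | inr b, inl a => FAx A F x b a | _, _ => 0 end).
    by case: (split i) => a; case: (split j) => b.
  ring.
Qed.

Theorem theorem1 (m n1 n2 K : nat)
  (A : mat m n1) (B : mat m n2) (c : vec n1) (d : vec n2) (F : mat m K.+1)
  (X : vec n1 -> Prop) (Uhat : vec K.+1 -> Prop)
  (* X closed convex *)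
  (HXc : vclosed X) (HXv : vconvex X)
  (* Uhat closed convex full-dimensional cone in R_+ x R^(k-1) *)
  (HUc : vclosed Uhat) (HUv : vconvex Uhat) (HUk : vcone Uhat)
  (HUf : vfull_dim Uhat) (HUp : forall u, Uhat u -> 0 <= u ord0)
  (* U nonempty and compact *)
  (HUne : exists u, Uset Uhat u) (HUcp : vcompact (Uset Uhat))
  (* (A2) feasibility *)
  (HA2 : exists x y, RLP_feasible A B F X Uhat x y)
  (* (A3) v* is finite, and v is v*_RLP *)
  (v : R) (HA3 : is_glb (RLP_values A B c d F X Uhat) v)
  (* (A4) relatively complete recourse *)
  (HA4 : forall x u, X x -> Uset Uhat u ->
         exists y : vec n2, forall i, mulmv B y i >= mulmv F u i - mulmv A x i)
  (r : R) (Hr : 0 < r)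
  (Hbound : forall u w, Uset Uhat u -> extreme_point (Wset B d) w ->
            dot u u + dot w w <= r) :
  is_glb (RLPbar_values A B c d F X Uhat r) v.
Proof.
  split.
  - move=> t [x [lam [Lam [rho [Hx [HCOP [Hrho ->]]]]]]].
    pose bu := fun (u : vec K.+1) i => mulmv F u i - mulmv A x i.
    pose beta := lam + r * rho.
    pose P := fun (u : vec K.+1) (y : vec n2) => Uset Uhat u -> (forall i, mulmv B y i >= bu u i) /\ dot d y <= beta.
    have Hy : forall u, exists y, P u y.
      move=> u; case: (classic (Uset Uhat u)) => Hu; last by exists (fun _ => 0).
      have [y0 Hy0] := HA4 x u Hx Hu.
      have Hrec : forall dl : vec m, (forall i, 0 <= dl i) ->
          (forall j, sumI (fun i => B i j * dl i) = 0) -> dot dl (bu u) <= 0.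
        move=> dl Hdl HB.
        have := @wd m n2 B (bu u) y0 dl Hdl Hy0.
        rewrite (@sumI_zero _ (fun l => _ * _)) //.
        by move=> l; rewrite HB; ring.
      have [y [Hy1 Hy2]] : exists y : vec n2, (forall i, mulmv B y i >= bu u i) /\ dot d y <= beta.
        apply: lp_dual; first by exists y0.
        move=> w Hw.
        have [e [He Hwe]] := @ext_reduce m n2 B d (bu u) Hrec w Hw.
        apply: Rle_trans Hwe _.
        case: (He) => HeW _; case: (HeW) => He0 HeB.
        have Hk : Kcone Uhat (join u e).
          split.
          + have -> : (fun a => join u e (lshift m a)) = u.
              apply: functional_extensionality => a; exact: join_l.
            by case: Hu.
          + move=> b; rewrite join_r; exact: He0.
        have := proj2 HCOP _ Hk.
        rewrite qform_join //; last by case: Hu.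
        have := Hbound u e Hu He.
        rewrite /beta => Hb Hq.
        have : rho * (dot u u + dot e e) <= rho * r by apply: Rmult_le_compat_l.
        rewrite /bu; lra.
      by exists y.
    pose yf := fun u => epsilon (inhabits (fun _ : 'I_n2 => 0)) (P u).
    have Hyf : forall u, P u (yf u) by move=> u; apply: epsilon_spec; exact: Hy.
    pose S := fun z => exists u, Uset Uhat u /\ z = dot d (yf u).
    have HSb : bound S.
      exists beta => z [u [Hu ->]]; exact: (proj2 (Hyf u Hu)).
    have HSne : exists z, S z.
      case: HUne => u Hu; by exists (dot d (yf u)), u.
    have [s Hs] := completeness S HSb HSne.
    have Hsb : s <= beta.
      apply: (proj2 Hs) => z [u [Hu ->]]; exact: (proj2 (Hyf u Hu)).
    have Hval : RLP_values A B c d F X Uhat (dot c x + s).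
      exists x, yf, s; split; last by split.
      split=> // u Hu i; have := proj1 (Hyf u Hu) i; rewrite /bu; lra.
    have := proj1 HA3 _ Hval; rewrite /beta in Hsb; lra.
  - move=> v' Hv'.
    apply: (proj2 HA3) => t [x [y [s [Hfeas [Hlub ->]]]]].
    apply: Rnot_lt_le => Hlt.
    pose eps := v' - (dot c x + s).
    have He : 0 < eps by rewrite /eps; lra.
    pose rho := eps / (4 * r).
    have Hrho : 0 < rho by apply: Rdiv_lt_0_compat; lra.
    have [MU HMU] := proj2 HUcp.
    have [u0 Hu0] := HUne.
    pose FS2 := sumI (fun b => (sumI (fun a => Rabs (F b a))) * (sumI (fun a => Rabs (F b a)))).
    have HFS0 : 0 <= FS2 by apply: sumI_ge0 => b; nra.
    pose delta := Rmin 1 (eps * rho / (FS2 + 1)).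
    have Hq : 0 < eps * rho / (FS2 + 1) by apply: Rdiv_lt_0_compat; nra.
    have Hdel : 0 < delta by apply: Rmin_glb_lt; lra.
    have Hdel1 : delta <= 1 by apply: Rmin_l.
    have Hdel2 : delta <= eps * rho / (FS2 + 1) by apply: Rmin_r.
    have HFSd : FS2 * (delta * delta) <= eps * rho.
      have H1 : delta * delta <= delta by nra.
      have H2 : (FS2 + 1) * (eps * rho / (FS2 + 1)) = eps * rho by field; lra.
      have H3 : FS2 * (delta * delta) <= (FS2 + 1) * delta by nra.
      have H4 : (FS2 + 1) * delta <= (FS2 + 1) * (eps * rho / (FS2 + 1)) by apply: Rmult_le_compat_l; lra.
      lra.
    have [Y [rep Hrep]] := @grid_rep K.+1 (Uset Uhat) (fun g => dot (y g) (y g)) MU delta Hdel HMU.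
    pose mu := (Rabs Y + 1) / eps.
    have Hmu : 0 < mu by apply: Rdiv_lt_0_compat; [have := Rabs_pos Y; lra| lra].
    have HYmu : Y / (4 * mu) <= eps / 4.
      have E : Y / (4 * mu) = (Y / (Rabs Y + 1)) * (eps / 4) by rewrite /mu; field; have := Rabs_pos Y; lra.
      rewrite E.
      have : Y / (Rabs Y + 1) <= 1.
        apply: (Rmult_le_reg_r (Rabs Y + 1)); first by have := Rabs_pos Y; lra.
        have E2 : Y / (Rabs Y + 1) * (Rabs Y + 1) = Y by field; have := Rabs_pos Y; lra.
        rewrite E2; have := Rle_abs Y; lra.
      move=> H; have : Y / (Rabs Y + 1) * (eps / 4) <= 1 * (eps / 4) by apply: Rmult_le_compat_r; lra.
      lra.
    have Hsup : forall g, Uset Uhat g -> dot d (y g) <= s.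
      move=> g Hg; apply: (proj1 Hlub); by exists g.
    have Hcore : forall (u : vec K.+1) (w : vec m), Uset Uhat u -> (forall b, 0 <= w b) ->
        0 <= Qe A B d F x (s + eps / 2) mu rho u w.
      move=> u w Hu Hw.
      have [Hg [Hd Hyg]] := Hrep u Hu.
      apply: (@core_pos m n1 n2 K A B d F x u w (rep u) (y (rep u)) s eps mu rho delta Y) => //.
      + by case: Hu.
      + move=> i; have := proj2 Hfeas _ Hg i; lra.
      + exact: Hsup.
    have HCOP : COP Uhat (Mbar A B d F x (s + eps / 2) (muE B d mu) rho).
      split; first by move=> i j; apply: Mbar_sym.
      move=> z [Hzu Hzw].
      rewrite qform_muE.
      set uz := fun a => z (lshift m a); set wz := fun b => z (rshift K.+1 b).
      have Hu0p := HUp _ Hzu.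
      case: (Rle_lt_or_eq_dec 0 (uz ord0) Hu0p) => Hpos.
      + pose tt := uz ord0.
        pose ut := vscale (/ tt) uz.
        pose wt := fun b => / tt * wz b.
        have Eu : uz = (fun a => tt * ut a).
          apply: functional_extensionality => a; rewrite /ut /vscale /tt; field; lra.
        have Ew : wz = (fun b => tt * wt b).
          apply: functional_extensionality => b; rewrite /wt /tt; field; lra.
        have Hut : Uset Uhat ut.
          split; first by apply: HUk => //; apply: Rlt_le; apply: Rinv_0_lt_compat.
          rewrite /ut /vscale /tt; field; lra.
        have Hwt : forall b, 0 <= wt b.
          move=> b; apply: Rmult_le_pos; [apply: Rlt_le; apply: Rinv_0_lt_compat; exact: Hpos| exact: Hzw].
        rewrite Eu Ew Qe_hom.
        apply: Rmult_le_pos; first nra.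
        exact: Hcore.
      + have Hz0 : forall a, uz a = 0.
          apply: (@uhat_zero K Uhat HUv HUk u0 Hu0 MU HMU) => //.
        rewrite /Qe.
        have -> : sumI (fun b => wz b * (mulmv F uz b - mulmv A x b * uz ord0)) = 0.
          apply: sumI_zero => b; rewrite -Hpos.
          rewrite /mulmv (@sumI_zero _ (fun a => F b a * uz a)); first ring.
          by move=> a; rewrite Hz0; ring.
        rewrite -Hpos.
        have H1 : 0 <= sumI (fun l => Ev B d uz wz l * Ev B d uz wz l) by apply: sumI_ge0 => l; nra.
        have H2 : 0 <= dot uz uz by apply: sumI_ge0 => a; nra.
        have H3 : 0 <= dot wz wz by apply: sumI_ge0 => b; nra.
        have : 0 <= mu * sumI (fun l => Ev B d uz wz l * Ev B d uz wz l) by apply: Rmult_le_pos; lra.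
        have : 0 <= rho * (dot uz uz + dot wz wz) by apply: Rmult_le_pos; lra.
        lra.
    have Hbar : RLPbar_values A B c d F X Uhat r (dot c x + (s + eps / 2) + r * rho).
      exists x, (s + eps / 2), (muE B d mu), rho; split; first by case: Hfeas.
      split=> //; split=> //; lra.
    have := Hv' _ Hbar.
    have E : r * rho = eps / 4 by rewrite /rho; field; lra.
    rewrite E /eps; lra.
Qed.
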